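(* Let $K$ be a field, $I\subset R=K[x_1,\ldots,x_n]$ a square-free monomial ideal, and $1\le i\le n$. If $I$ has the copersistence property, then the deletion $I\setminus x_i$ has the copersistence property.
   Context: An ideal $I$ in a commutative Noetherian ring $R$ has the copersistence property if $\mathrm{Ass}_R(R/I^k)\supseteq\mathrm{Ass}_R(R/I^{k+1})$ for all $k\ge1$. If $\{u_1,\ldots,u_m\}$ is the minimal monomial generating set of $I$, the deletion $I\setminus x_i$ is the monomial ideal (in the polynomial ring over $K$ in the variables other than $x_i$) generated by the polynomials obtained from $u_1,\ldots,u_m$ by setting $x_i=0$, i.e. by those $u_k$ not divisible by $x_i$. *)

(* Defs.v *)
From mathcomp Require Import all_boot all_order all_algebra.
From mathcomp Require Import mpoly.
Set Implicit Arguments. Unset Strict Implicit. Unset Printing Implicit Defensive.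
Import GRing.Theory.
Local Open Scope ring_scope.

Section Ideals.
Variable R : comNzRingType.

Definition is_ideal (I : R -> Prop) : Prop :=
  [/\ I 0, (forall a b, I a -> I b -> I (a + b)) & (forall r a, I a -> I (r * a))].

Definition prime_ideal (P : R -> Prop) : Prop :=
  [/\ is_ideal P, ~ P 1 & (forall a b, P (a * b) -> P a \/ P b)].

Definition gen_ideal (s : seq R) : R -> Prop :=
  fun f => exists c : 'I_(size s) -> R, f = \sum_(j < size s) c j * s`_j.

Definition ideal_pow (I : R -> Prop) (k : nat) : R -> Prop :=
  fun f => exists (m : nat) (c : 'I_m -> R) (a : 'I_m -> 'I_k -> R),
    (forall j l, I (a j l)) /\ f = \sum_(j < m) c j * \prod_(l < k) a j l.

(* P \in Ass_R(R/J): P is a prime ideal which is the annihilator (J : f)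
   of the class of some f in R/J. *)
Definition Ass (J : R -> Prop) (P : R -> Prop) : Prop :=
  prime_ideal P /\ exists f : R, forall g, P g <-> J (g * f).

Definition copersistent (I : R -> Prop) : Prop :=
  forall k : nat, (1 <= k)%N -> forall P, Ass (ideal_pow I k.+1) P -> Ass (ideal_pow I k) P.

End Ideals.

Definition monomial_ideal (K : fieldType) (n : nat) (s : seq 'X_{1..n}) :
  {mpoly K[n]} -> Prop :=
  gen_ideal [seq 'X_[m] | m <- s].

Definition squarefree_mon (n : nat) (m : 'X_{1..n}) : bool :=
  [forall j : 'I_n, (m j <= 1)%N].

Definition mon_dvd (n : nat) (u v : 'X_{1..n}) : bool :=
  [forall j : 'I_n, (u j <= v j)%N].

Definition minimal_mon_gens (n : nat) (s : seq 'X_{1..n}) : Prop :=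
  uniq s /\ forall u v, u \in s -> v \in s -> mon_dvd u v -> u = v.

(* Deletion: the variables other than x_i of K[x_0..x_n] are identified with
   those of K[y_0..y_(n-1)] via y_j |-> x_(lift i j). *)
Definition delete_mon (n : nat) (i : 'I_n.+1) (m : 'X_{1..n.+1}) : 'X_{1..n} :=
  [multinom m (lift i j) | j < n].

Definition deletion_gens (n : nat) (i : 'I_n.+1) (s : seq 'X_{1..n.+1}) :
  seq 'X_{1..n} :=
  map (@delete_mon n i) (filter (fun m : 'X_{1..n.+1} => m i == 0%N) s).
Arguments monomial_ideal K {n} s _.

(* Main.v *)
Require Import Defs.
From mathcomp Require Import all_boot all_order all_algebra.
From mathcomp Require Import mpoly.
From mathcomp Require Import zify ring.
Set Implicit Arguments. Unset Strict Implicit. Unset Printing Implicit Defensive.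
Import GRing.Theory.

Section Gen.
Variable R : comNzRingType.
Local Open Scope ring_scope.
Implicit Types (I P : R -> Prop).

Lemma ideal_pow_is_ideal I k : is_ideal (ideal_pow I k).
Proof.
split.
- exists 0%N, (fun _ => 0), (fun _ _ => 0); split; first by case.
  by rewrite big_ord0.
- move=> a b [m1 [c1 [a1 [h1 ->]]]] [m2 [c2 [a2 [h2 ->]]]].
  exists (m1 + m2)%N.
  exists (fun j => match split j with inl j1 => c1 j1 | inr j2 => c2 j2 end).
  exists (fun j => match split j with inl j1 => a1 j1 | inr j2 => a2 j2 end).
  split.
    by move=> j l; case: (split j).
  rewrite big_split_ord /=; congr (_ + _); apply: eq_bigr => j _.
    by rewrite -[lshift _ _]/(unsplit (inl j)) unsplitK.
  by rewrite -[rshift _ _]/(unsplit (inr j)) unsplitK.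
- move=> r a [m [c [a' [h ->]]]]; exists m, (fun j => r * c j), a'; split => //.
  by rewrite mulr_sumr; apply: eq_bigr => j _; rewrite mulrA.
Qed.

Lemma ideal_sum I (r : seq R) : is_ideal I -> (forall x, x \in r -> I x) ->
  I (\sum_(x <- r) x).
Proof.
case=> I0 ID _ h; elim: r h => [|x r IH] h; first by rewrite big_nil.
rewrite big_cons; apply: ID; first by apply: h; rewrite inE eqxx.
by apply: IH => y yr; apply: h; rewrite inE yr orbT.
Qed.

Lemma ideal_pow_mulI I k p a : ideal_pow I k p -> I a -> ideal_pow I k.+1 (a * p).
Proof.
move=> [m [c [a' [h ->]]]] Ia.
exists m, c, (fun j l => match unlift ord0 l with Some l' => a' j l' | None => a end).
split.
  by move=> j l; case: (unlift ord0 l).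
rewrite mulr_sumr; apply: eq_bigr => j _.
rewrite big_ord_recl /= unlift_none mulrCA; congr (_ * (_ * _)).
by apply: eq_bigr => l _; rewrite liftK.
Qed.

Lemma ideal_pow0 I x : ideal_pow I 0 x.
Proof.
exists 1%N, (fun _ => x), (fun _ _ => 0); split; first by move=> j [].
by rewrite big_ord1 big_ord0 mulr1.
Qed.

Lemma prime_pow P x k : prime_ideal P -> P (x ^+ k.+1) -> P x.
Proof.
move=> [_ _ pr]; elim: k => [|k IH]; first by rewrite expr1.
by rewrite exprS => /pr [//|/IH].
Qed.

Lemma prime_not1 P : prime_ideal P -> ~ P 1.
Proof. by case. Qed.

End Gen.

Section Comb.
Variable n : nat.
Implicit Types (m g x y w : 'X_{1..n}) (s : seq 'X_{1..n}) (S T : {set 'I_n}).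

Fixpoint inpow s k m : bool :=
  if k is k'.+1 then has (fun g => (g <= m)%MM && inpow s k' (m - g)%MM) s
  else true.

Definition deg S m := (\sum_(j in S) m j)%N.
Definition mcover s S := all (fun g => 0 < deg S g) s.
Definition priv s S v := has (fun g => (0 < g v) && (deg (S :\ v) g == 0)) s.
Definition minmcover s S := mcover s S && [forall v in S, priv s S v].
Definition sqf s := forall g, g \in s -> forall j, g j <= 1.

Lemma degD S m1 m2 : deg S (m1 + m2)%MM = deg S m1 + deg S m2.
Proof. by rewrite /deg -big_split; apply: eq_bigr => j _; rewrite mnmDE. Qed.

Lemma degB S m1 m2 : (m2 <= m1)%MM -> deg S (m1 - m2)%MM = deg S m1 - deg S m2.
Proof.
move=> le; rewrite -{2}(submK le) degD; lia.
Qed.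

Lemma deg_le S m1 m2 : (m1 <= m2)%MM -> deg S m1 <= deg S m2.
Proof. by move/mnm_lepP=> h; apply: leq_sum => j _. Qed.

Lemma deg_sub S T m : T \subset S -> deg T m <= deg S m.
Proof.
move=> sub; rewrite /deg [X in _ <= X](big_setID T) /= (setIidPr sub); exact: leq_addr.
Qed.

Lemma deg_pos S m : 0 < deg S m -> exists2 j, j \in S & 0 < m j.
Proof.
move=> h; case: (boolP [exists j in S, 0 < m j]) => [/existsP [j /andP [hj hm]]|/existsPn H].
  by exists j.
move: h; rewrite /deg big1 // => j hj; move: (H j); rewrite hj /=; lia.
Qed.

Lemma deg_ge S m j : j \in S -> m j <= deg S m.
Proof. by move=> hj; rewrite /deg (bigD1 j) //=; exact: leq_addr. Qed.

Lemma deg0 S : deg S 0%MM = 0.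
Proof. by rewrite /deg big1 // => j _; rewrite mnm0E. Qed.

Lemma degU S v : deg S U_(v)%MM = (v \in S).
Proof.
rewrite /deg; case: (boolP (v \in S)) => hv.
  rewrite (bigD1 v) //= big1 ?mnm1E ?eqxx // => j /andP [_ hj].
  by rewrite mnm1E eq_sym (negbTE hj).
by rewrite big1 // => j hj; rewrite mnm1E; case: eqP => // e; subst; rewrite hj in hv.
Qed.

Lemma degD1 S v m : v \in S -> deg S m = m v + deg (S :\ v) m.
Proof.
move=> vS; rewrite /deg (bigD1 v) //=; congr (_ + _).
by apply: eq_bigl => j; rewrite !inE andbC.
Qed.

Lemma lem_add2 m1 m2 m3 m4 : (m1 <= m2)%MM -> (m3 <= m4)%MM -> (m1 + m3 <= m2 + m4)%MM.
Proof.
move=> /mnm_lepP h1 /mnm_lepP h2; apply/mnm_lepP => j; rewrite !mnmDE.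
exact: leq_add.
Qed.

Lemma inpow_up s k m m' : inpow s k m -> (m <= m')%MM -> inpow s k m'.
Proof.
elim: k m m' => //= k IH m m' /hasP [g gs /andP [gm ip]] le.
apply/hasP; exists g => //; rewrite (lepm_trans gm le) /=.
apply: IH ip _; apply/mnm_lepP => j; rewrite !mnmBE.
move/mnm_lepP: le => le; exact: leq_sub2r.
Qed.

Lemma inpow_add s a b m1 m2 :
  inpow s a m1 -> inpow s b m2 -> inpow s (a + b) (m1 + m2)%MM.
Proof.
elim: a m1 => [|a IH] m1 /=.
  by move=> _ h; apply: inpow_up h _; exact: lem_addl.
move=> /hasP [g gs /andP [gm ip]] h2; apply/hasP; exists g => //.
have gm' : (g <= m1 + m2)%MM := lepm_trans gm (lem_addr _ _).
rewrite gm' /=.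
have -> : (m1 + m2 - g = (m1 - g) + m2)%MM.
  move/mnm_lepP: gm => gm.
  by apply/mnmP => j; rewrite !mnmE; move: (gm j); lia.
exact: IH.
Qed.

Lemma inpow_deg s S k m : mcover s S -> inpow s k m -> k <= deg S m.
Proof.
move=> /allP cov; elim: k m => //= k IH m /hasP [g gs /andP [gm ip]].
have := IH _ ip; rewrite degB //; have := cov g gs; have := deg_le S gm; lia.
Qed.

Lemma inpow_trunc s k x y : sqf s -> (forall j, 0 < y j -> k <= x j) ->
  inpow s k (x + y)%MM -> inpow s k x.
Proof.
move=> sq; elim: k x => //= k IH x hy /hasP [g gs /andP [gm ip]].
have gx : (g <= x)%MM.
  apply/mnm_lepP => j; move/mnm_lepP: gm => /(_ j); rewrite mnmDE.
  have := sq g gs j; case: (posnP (y j)) => [->|/hy]; lia.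
apply/hasP; exists g => //; rewrite gx /=.
apply: (IH _ _ (_ : inpow s k (x - g + y)%MM)).
  move=> j /hy; rewrite mnmBE; have := sq g gs j; lia.
have -> : (x - g + y = x + y - g)%MM.
  move/mnm_lepP: gx => gx.
  by apply/mnmP => j; rewrite !mnmE; move: (gx j); lia.
exact: ip.
Qed.

Lemma priv_deg s S v g : sqf s -> g \in s -> v \in S -> 0 < g v ->
  deg (S :\ v) g = 0 -> deg S g = 1 /\ forall j, j \in S -> j != v -> g j = 0.
Proof.
move=> sq gs vS gv d0; split.
  rewrite /deg (bigD1 v) //=; move: d0; rewrite /deg.
  rewrite (eq_bigl (fun j => (j \in S) && (j != v))); last first.
    by move=> j; rewrite !inE andbC.
  move=> ->; have := sq g gs v; lia.
move=> j jS jv; have : g j <= deg (S :\ v) g by apply: deg_ge; rewrite !inE jv.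
rewrite d0; lia.
Qed.

Lemma inpow_mincover s S k m : sqf s -> minmcover s S -> k <= deg S m ->
  (forall j, j \notin S -> k <= m j) -> inpow s k m.
Proof.
move=> sq /andP [cov /forall_inP pv]; elim: k m => //= k IH m hd ho.
have [v vS mv] : exists2 v, v \in S & 0 < m v by apply: deg_pos; lia.
have /hasP [g gs /andP [gv /eqP gd]] := pv v vS.
have [dg gz] := priv_deg sq gs vS gv gd.
have gm : (g <= m)%MM.
  apply/mnm_lepP => j; have := sq g gs j.
  case: (boolP (j \in S)) => jS; last by move: (ho j jS); lia.
  case: (eqVneq j v) => [->|jv]; first lia.
  by rewrite gz.
apply/hasP; exists g => //; rewrite gm /=; apply: IH.
  rewrite degB // dg; lia.
move=> j jS; rewrite mnmBE; have := ho j jS; have := sq g gs j; lia.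
Qed.

Lemma sqf_cover s m : sqf s -> (forall S, mcover s S -> 0 < deg S m) -> inpow s 1 m.
Proof.
move=> sq h; apply/negPn/negP => nm.
pose S := [set j | m j == 0].
have cS : mcover s S.
  apply/allP => g gs.
  case: (boolP [exists j, m j < g j]) => [/existsP [j hj]|/existsPn H].
    have gj := sq g gs j.
    have jS : j \in S by rewrite inE; apply/eqP; lia.
    have := deg_ge g jS; lia.
  case/negP: nm => /=; apply/hasP; exists g => //; rewrite andbT.
  by apply/mnm_lepP => j; move: (H j); lia.
have := h S cS; rewrite /deg big1 // => j; rewrite /S inE => /eqP ->.
by [].
Qed.

Lemma drop_cover s S v : mcover s S -> v \in S -> ~~ priv s S v -> mcover s (S :\ v).
Proof.
move=> /allP cov vS /hasPn np; apply/allP => g gs.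
case: (posnP (deg (S :\ v) g)) => // d0.
have := np g gs; rewrite d0 eqxx andbT -leqNgt leqn0 => /eqP gv.
have := cov g gs; rewrite (degD1 _ vS) gv d0; lia.
Qed.

Lemma mincover_exists s S : mcover s S -> exists2 T : {set 'I_n}, T \subset S & minmcover s T.
Proof.
move: {2}#|S| (leqnn #|S|) => c; elim: c S => [|c IH] S hc cov.
  exists S => //; rewrite /minmcover cov /=; apply/forall_inP => v vS.
  by move: hc; rewrite leqn0 => /eqP/cards0_eq E; rewrite E inE in vS.
case: (boolP [forall v in S, priv s S v]) => h.
  by exists S; [exact: subxx | rewrite /minmcover cov].
move/forall_inPn: h => [v vS np].
have hc' : #|S :\ v| <= c by move: hc; rewrite (cardsD1 v S) vS; lia.
have [T sub mc] := IH (S :\ v) hc' (drop_cover cov vS np).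
by exists T => //; apply: subset_trans sub (subD1set _ _).
Qed.

Definition mu k w := \sum_(j < n) (k - w j).

Lemma greedy s k w : ~~ inpow s k w -> exists w', [/\ (w <= w')%MM, ~~ inpow s k w' &
  forall j, inpow s k (w' + U_(j))%MM || (k <= w' j)].
Proof.
move: {2}(mu k w) (leqnn (mu k w)) => c; elim: c w => [|c IH] w hc nw.
  exists w; split => //; first exact: lepm_refl.
  move=> j; apply/orP; right; move: hc; rewrite leqn0 /mu sum_nat_eq0 => /forallP /(_ j) /=.
  lia.
case: (boolP [forall j, inpow s k (w + U_(j))%MM || (k <= w j)]) => [/forallP h|/forallPn [j]].
  by exists w; split => //; first exact: lepm_refl.
rewrite negb_or => /andP [nj kj].
have hc' : mu k (w + U_(j))%MM <= c.
  move: hc; rewrite /mu (bigD1 j) //= [X in _ -> X <= _](bigD1 j) //= mnmDE mnm1E eqxx.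
  have E : \sum_(i < n | i != j) (k - (w + U_(j))%MM i) = \sum_(i < n | i != j) (k - w i).
    by apply: eq_bigr => i ij; rewrite mnmDE mnm1E eq_sym (negbTE ij) addn0.
  rewrite E; change (nat_of_bool true) with 1.
move: (\sum_(i < n | i != j) (k - w i)) => X.
move: kj; rewrite -ltnNge; move: (w j) => a.
lia.
have [w' [le nw' H]] := IH (w + U_(j))%MM hc' nj.
exists w'; split => //; exact: (lepm_trans (lem_addr _ _) le).
Qed.

Lemma greedy_colon s k w : sqf s -> ~~ inpow s k w ->
  (forall j, inpow s k (w + U_(j))%MM || (k <= w j)) ->
  forall m, inpow s k (m + w)%MM = (0 < deg [set j | inpow s k (w + U_(j))%MM] m).
Proof.
move=> sq nw H m; apply/idP/idP => [ip|/deg_pos [j]].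
  case: (posnP (deg [set j | inpow s k (w + U_(j))%MM] m)) => // d0.
  case/negP: nw; apply: (inpow_trunc (y := m)) => //; last by rewrite addmC.
  move=> j mj; move: (H j) => /orP [hj|//].
  have : m j <= 0 by rewrite -d0; apply: deg_ge; rewrite inE.
  lia.
rewrite inE => hj mj; apply: inpow_up hj _; rewrite (addmC m).
apply: lem_add2; first exact: lepm_refl.
by apply/mnm_lepP => i; rewrite mnm1E; case: eqP => [<-|]; lia.
Qed.

End Comb.

Section Poly.
Variables (K : fieldType) (n : nat).
Local Notation R := {mpoly K[n]}.
Local Open Scope ring_scope.
Implicit Types (m g x y w : 'X_{1..n}) (s : seq 'X_{1..n}) (S T : {set 'I_n}) (p q : R).

Definition MI s k p : bool := all (inpow s k) (msupp p).
Definition PS S k p : bool := all (fun m => (k <= deg S m)%N) (msupp p).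

Lemma MI0 s k : MI s k 0.
Proof. by rewrite /MI msupp0. Qed.

Lemma MIk0 s p : MI s 0 p.
Proof. by apply/allP. Qed.

Lemma MID s k p q : MI s k p -> MI s k q -> MI s k (p + q).
Proof.
move=> /allP hp /allP hq; apply/allP => m /msuppD_le; rewrite mem_cat.
by case/orP; [apply: hp | apply: hq].
Qed.

Lemma MIM s a b p q : MI s a p -> MI s b q -> MI s (a + b) (p * q).
Proof.
move=> /allP hp /allP hq; apply/allP => m /msuppM_le /allpairsP [[m1 m2] /= [h1 h2 ->]].
by apply: inpow_add; [apply: hp | apply: hq].
Qed.

Lemma MIX s k m : inpow s k m -> MI s k 'X_[m].
Proof. by move=> h; rewrite /MI msuppX /= h. Qed.

Lemma MIsum s k (I : Type) (r : seq I) (F : I -> R) :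
  (forall i, MI s k (F i)) -> MI s k (\sum_(i <- r) F i).
Proof.
move=> h; elim: r => [|i r IH]; first by rewrite big_nil MI0.
by rewrite big_cons MID.
Qed.

Lemma gen_MI s p : gen_ideal [seq ('X_[m] : R) | m <- s] p -> MI s 1 p.
Proof.
move=> [c ->]; apply: MIsum => j.
have jlt : (j < size s)%N by have := ltn_ord j; rewrite [X in (_ < X)%N -> _]size_map.
rewrite (nth_map 0%MM) //.
have := MIM (MIk0 s (c j)) (MIX (_ : inpow s 1 (nth 0%MM s j))); apply.
by apply/hasP; exists (nth 0%MM s j); [exact: mem_nth | rewrite lepm_refl].
Qed.

Lemma gen_X s g : g \in s -> gen_ideal [seq ('X_[m] : R) | m <- s] 'X_[g].
Proof.
move=> gs; have il : (index g s < size [seq 'X_[m] : R | m <- s])%N.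
  by rewrite size_map index_mem.
exists (fun j => ((nat_of_ord j == index g s)%:R : R)).
rewrite (bigD1 (Ordinal il)) //= eqxx mul1r big1 ?addr0.
  by rewrite (nth_map 0%MM) ?nth_index // index_mem.
move=> j hj; have -> : (nat_of_ord j == index g s) = false.
  by apply/negP => /eqP e; move: hj; rewrite -(inj_eq val_inj) /= e eqxx.
by rewrite mul0r.
Qed.

Lemma ideal_pow_X s k m : inpow s k m -> ideal_pow (monomial_ideal K s) k 'X_[m].
Proof.
elim: k m => [|k IH] m /=; first by move=> _; apply: ideal_pow0.
move=> /hasP [g gs /andP [gm ip]].
rewrite -(submK gm) mpolyXD mulrC; apply: ideal_pow_mulI; first exact: IH.
exact: gen_X.
Qed.

Lemma MI_ideal_pow s k p : MI s k p -> ideal_pow (monomial_ideal K s) k p.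
Proof.
move=> /allP h; rewrite (mpolyE p) big_seq; apply: (big_ind (ideal_pow _ k)).
- by case: (ideal_pow_is_ideal (monomial_ideal K s) k).
- by case: (ideal_pow_is_ideal (monomial_ideal K s) k).
move=> m ms; rewrite -mul_mpolyC.
by case: (ideal_pow_is_ideal (monomial_ideal K s) k) => _ _; apply; apply: ideal_pow_X; apply: h.
Qed.

Lemma MIprod s k (F : 'I_k -> R) : (forall l, MI s 1 (F l)) -> MI s k (\prod_(l < k) F l).
Proof.
elim: k F => [|k IH] F h; first by rewrite big_ord0 /MI msupp1 /=.
rewrite big_ord_recr /=.
have := MIM (IH (fun l => F (widen_ord (leqnSn k) l)) (fun l => h _)) (h ord_max).
by rewrite addn1.
Qed.

Lemma ideal_pow_MI s k p : ideal_pow (monomial_ideal K s) k p -> MI s k p.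
Proof.
move=> [m [c [a [h ->]]]]; apply: MIsum => j.
have := MIM (MIk0 s (c j)) (MIprod (fun l => gen_MI (h j l))).
by rewrite add0n.
Qed.

Lemma ipowE s k p : ideal_pow (monomial_ideal K s) k p <-> MI s k p.
Proof. by split; [apply: ideal_pow_MI | apply: MI_ideal_pow]. Qed.


Lemma mcoeff_filt (Q : pred 'X_{1..n}) p x :
  (\sum_(m <- msupp p | Q m) p@_m *: 'X_[m])@_x = if Q x then p@_x else 0.
Proof.
rewrite raddf_sum /=.
under eq_bigr do rewrite mcoeffZ mcoeffX.
case: (boolP (x \in msupp p)) => xs.
  rewrite (big_rem x xs) /= eqxx mulr1 big1_seq ?addr0; first by case: (Q x).
  move=> m /andP [_]; rewrite mem_rem_uniq ?msupp_uniq // inE => /andP [mx _].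
  by rewrite (negbTE mx) mulr0.
rewrite big1_seq; first by rewrite memN_msupp_eq0 //; case: (Q x).
move=> m /andP [_ ms]; case: eqP => [e|_]; last by rewrite mulr0.
by subst; rewrite ms in xs.
Qed.

Lemma KL S (a b : R) da db :
  (exists2 m, m \in msupp a & deg S m = da) -> (forall m, m \in msupp a -> da <= deg S m)%N ->
  (exists2 m, m \in msupp b & deg S m = db) -> (forall m, m \in msupp b -> db <= deg S m)%N ->
  exists2 m, m \in msupp (a * b) & deg S m = (da + db)%N.
Proof.
move=> [ma maa da_] ha [mb mbb db_] hb.
pose a0 := \sum_(m <- msupp a | deg S m == da) a@_m *: 'X_[m].
pose b0 := \sum_(m <- msupp b | deg S m == db) b@_m *: 'X_[m].
have ca0 x : a0@_x = if deg S x == da then a@_x else 0 by apply: mcoeff_filt.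
have cb0 x : b0@_x = if deg S x == db then b@_x else 0 by apply: mcoeff_filt.
have a0n : a0 != 0.
  apply/eqP => e; have := ca0 ma; rewrite e mcoeff0 da_ eqxx => h.
  by move: maa; rewrite mcoeff_msupp -h eqxx.
have b0n : b0 != 0.
  apply/eqP => e; have := cb0 mb; rewrite e mcoeff0 db_ eqxx => h.
  by move: mbb; rewrite mcoeff_msupp -h eqxx.
have sa0 x : x \in msupp a0 -> deg S x = da.
  by rewrite mcoeff_msupp ca0; case: (deg S x =P da) => // _; rewrite eqxx.
have sb0 x : x \in msupp b0 -> deg S x = db.
  by rewrite mcoeff_msupp cb0; case: (deg S x =P db) => // _; rewrite eqxx.
have sa1 x : x \in msupp (a - a0) -> (da < deg S x)%N.
  rewrite mcoeff_msupp mcoeffB ca0; case: (deg S x =P da) => [_|ne]; first by rewrite subrr eqxx.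
  by rewrite subr0 -mcoeff_msupp => /ha; lia.
have sb1 x : x \in msupp (b - b0) -> (db < deg S x)%N.
  rewrite mcoeff_msupp mcoeffB cb0; case: (deg S x =P db) => [_|ne]; first by rewrite subrr eqxx.
  by rewrite subr0 -mcoeff_msupp => /hb; lia.
have nz : a0 * b0 != 0 by rewrite mulf_neq0.
have [m mab] : exists m, m \in msupp (a0 * b0).
  case E: (msupp (a0 * b0)) => [|m r]; last by exists m; rewrite inE eqxx.
  by move: nz; rewrite -msupp_eq0 E.
have dm : deg S m = (da + db)%N.
  by move: mab => /msuppM_le /allpairsP [[m1 m2] /= [h1 h2 ->]]; rewrite degD (sa0 _ h1) (sb0 _ h2).
have E : a * b = a0 * b0 + (a0 * (b - b0) + (a - a0) * b).
  by ring.
have r0 : (a0 * (b - b0) + (a - a0) * b)@_m = 0.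
  have t1 : (a0 * (b - b0))@_m = 0.
    apply/eqP; rewrite mcoeff_eq0; apply/negP => /msuppM_le /allpairsP [[m1 m2] /= [h1 h2 e]].
    by move: dm; rewrite e degD (sa0 _ h1); have := sb1 _ h2; lia.
  have t2 : ((a - a0) * b)@_m = 0.
    apply/eqP; rewrite mcoeff_eq0; apply/negP => /msuppM_le /allpairsP [[m1 m2] /= [h1 h2 e]].
    by move: dm; rewrite e degD; have := sa1 _ h1; have := hb _ h2; lia.
  by rewrite mcoeffD t1 t2 addr0.
exists m => //; rewrite mcoeff_msupp E mcoeffD r0 addr0 -mcoeff_msupp //.
Qed.

Lemma PS_ideal S k : is_ideal (PS S k).
Proof.
split.
- by rewrite /PS msupp0.
- move=> a b /allP ha /allP hb; apply/allP => m /msuppD_le; rewrite mem_cat.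
  by case/orP; [apply: ha | apply: hb].
- move=> r a /allP ha; apply/allP => m /msuppM_le /allpairsP [[m1 m2] /= [h1 h2 ->]].
  by rewrite degD; have := ha _ h2; lia.
Qed.

Lemma PS_not1 S : ~ PS S 1 1.
Proof. by rewrite /PS msupp1 /= deg0. Qed.

Lemma PS_X S k m : PS S k 'X_[m] = (k <= deg S m)%N.
Proof. by rewrite /PS msuppX /= andbT. Qed.

Lemma exmin S (p : R) m0 : m0 \in msupp p -> exists d, [/\ (d <= deg S m0)%N,
  (exists2 m, m \in msupp p & deg S m = d) & forall m, m \in msupp p -> (d <= deg S m)%N].
Proof.
move=> m0p.
have ex : exists d, has (fun m => deg S m == d) (msupp p).
  by exists (deg S m0); apply/hasP; exists m0.
case: (ex_minnP ex) => d /hasP [m mp /eqP md] hmin.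
exists d; split.
- by apply: hmin; apply/hasP; exists m0.
- by exists m.
- by move=> m' m'p; apply: hmin; apply/hasP; exists m'.
Qed.

Lemma PS_prime S : prime_ideal (PS S 1).
Proof.
split; [exact: PS_ideal | exact: PS_not1 |].
move=> a b hab; case: (boolP (PS S 1 a)) => ha; first by left.
case: (boolP (PS S 1 b)) => hb; first by right.
exfalso; move/allPn: ha => [ma maa]; rewrite -ltnNge ltnS leqn0 => /eqP da.
move/allPn: hb => [mb mbb]; rewrite -ltnNge ltnS leqn0 => /eqP db.
have e1 : exists2 m, m \in msupp a & deg S m = 0%N by exists ma.
have e2 : exists2 m, m \in msupp b & deg S m = 0%N by exists mb.
have [m mab dm] := KL e1 (fun _ _ => leq0n _) e2 (fun _ _ => leq0n _).
by move/allP: hab => /(_ m mab); rewrite dm.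
Qed.

Lemma PS_primary S k (g f : R) : PS S k.+1 (g * f) -> ~~ PS S k.+1 f -> PS S 1 g.
Proof.
move=> hgf hf; apply/negPn/negP => hg.
move/allPn: hg => [mg mgg]; rewrite -ltnNge ltnS leqn0 => /eqP dg.
move/allPn: hf => [mf mff]; rewrite -ltnNge ltnS => dmf.
have [d [dle ex hmin]] := exmin S mff.
have e1 : exists2 m, m \in msupp g & deg S m = 0%N by exists mg.
have [m mab dm] := KL e1 (fun _ _ => leq0n _) ex hmin.
by move/allP: hgf => /(_ m mab); rewrite dm; lia.
Qed.

Lemma PS_mono S T k p : T \subset S -> PS T k p -> PS S k p.
Proof.
move=> sub /allP h; apply/allP => m /h; have := deg_sub m sub; lia.
Qed.

Lemma MI_PS s S k p : mcover s S -> MI s k p -> PS S k p.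
Proof. by move=> cov /allP h; apply/allP => m /h; apply: inpow_deg. Qed.

Lemma colonX s k w (Q : pred 'X_{1..n}) : (forall m, inpow s k (m + w)%MM = Q m) ->
  forall g : R, MI s k (g * 'X_[w]) = all Q (msupp g).
Proof.
move=> h g; rewrite /MI (perm_all _ (msuppMX g w)) all_map.
by apply: eq_all => m /=; rewrite addmC h.
Qed.

End Poly.

Section NTFdef.
Variable n : nat.
Definition NTF (s : seq 'X_{1..n}) := forall k m, (0 < k)%N ->
  (forall S, mcover s S -> k <= deg S m)%N -> inpow s k m.

Lemma inpow_mul s k (g : 'X_{1..n}) : g \in s -> inpow s k (g *+ k)%MM.
Proof.
move=> gs; elim: k => [|k IH] //=; rewrite mulmS.
have h1 : inpow s 1 g by apply/hasP; exists g => //; rewrite lepm_refl.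
exact: (inpow_add h1 IH).
Qed.
End NTFdef.

Section Main.
Variables (K : fieldType) (n : nat).
Local Notation R := {mpoly K[n]}.
Local Open Scope ring_scope.
Local Notation Ipow s k := (ideal_pow (monomial_ideal K s) k).
Implicit Types (s : seq 'X_{1..n}).

Lemma Ass_down s (P : R -> Prop) d : copersistent (monomial_ideal K s) ->
  Ass (Ipow s (1 + d)) P -> Ass (Ipow s 1) P.
Proof.
move=> cp; elim: d => [|d IH] //; rewrite !add1n => h; apply: IH.
by rewrite add1n; apply: cp.
Qed.

Lemma copers_NTF s : sqf s -> copersistent (monomial_ideal K s) -> NTF s.
Proof.
move=> sq cp k m k0 hcov; apply/negPn/negP => nm.
have [w [mw nw H]] := greedy nm.
set T := [set j | inpow s k (w + U_(j))%MM].
have col := greedy_colon sq nw H.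
have AT : Ass (Ipow s k) (PS T 1).
  split; first exact: PS_prime.
  by exists 'X_[w] => g; rewrite ipowE (colonX col).
have A1 : Ass (Ipow s 1) (PS T 1).
  by apply: (Ass_down (d := k.-1)) cp _; rewrite add1n prednK.
case: A1 => _ [f Hf].
have Hf' g : PS T 1 g <-> MI s 1 (g * f) by rewrite -ipowE; exact: Hf.
have covT : mcover s T.
  apply/allP => g gs; have : PS T 1 ('X_[g] : R); last by rewrite PS_X.
  apply/Hf; rewrite mulrC; case: (ideal_pow_is_ideal (monomial_ideal K s) 1) => _ _; apply.
  by apply: ideal_pow_X; apply/hasP; exists g => //; rewrite lepm_refl.
have mcT : minmcover s T.
  rewrite /minmcover covT /=; apply/forall_inP => v vT; apply/negPn/negP => np.
  have covT' := drop_cover covT vT np.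
  have hv : MI s 1 ('X_[U_(v)] * f) by apply/Hf'; rewrite PS_X degU vT.
  have [_ _ pr] := PS_prime K (T :\ v).
  case: (pr _ _ (MI_PS covT' hv)); first by rewrite PS_X degU !inE eqxx.
  move=> hf; have fT : PS T 1 f := PS_mono (subD1set T v) hf.
  have ff : MI s 1 (f * f) by apply/Hf'.
  have fI : MI s 1 f.
    apply/allP => x xf; apply: sqf_cover => // S cS.
    have [_ _ prS] := PS_prime K S.
    by case: (prS _ _ (MI_PS cS ff)) => /allP h; exact: h x xf.
  have : PS T 1 (1 : R) by apply/Hf'; rewrite mul1r.
  exact: PS_not1.
pose W := [multinom (if j \in T then 0%N else k) | j < n].
have hW : inpow s k (m + W)%MM.
  apply: (inpow_mincover sq mcT).
    by rewrite degD; have := hcov T covT; lia.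
  by move=> j jT; rewrite mnmDE mnmE (negbTE jT); lia.
have : inpow s k (W + w)%MM.
  apply: inpow_up hW _; rewrite (addmC W); apply: lem_add2 => //; exact: lepm_refl.
rewrite col /deg big1 // => j jT; by rewrite mnmE jT.
Qed.

Lemma NTF_copers s : sqf s -> NTF s -> copersistent (monomial_ideal K s).
Proof.
move=> sq ntf k k1 P [Ppr [f Hf]].
have Hf' g : P g <-> MI s k.+1 (g * f) by rewrite -ipowE; exact: Hf.
have [[P0 PD PM] P1 Pmul] := Ppr.
have nf : ~~ MI s k.+1 f by apply/negP => h; apply: P1; apply/Hf'; rewrite mul1r.
move/allPn: nf => [m mf nm].
have [S cS dS] : exists2 S, mcover s S & (deg S m < k.+1)%N.
  case: (boolP [exists S, mcover s S && (deg S m < k.+1)%N]) => [/existsP [S /andP [c d]]|/existsPn h].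
    by exists S.
  case/negP: nm; apply: ntf => // S cS; move: (h S); rewrite cS /= -leqNgt.
  by [].
have [T TS mcT] := mincover_exists cS.
have covT : mcover s T by case/andP: mcT.
have nfT : ~~ PS T k.+1 f.
  by apply/allPn; exists m => //; rewrite -ltnNge; have := deg_sub m TS; lia.
have PT1 g : P g -> PS T 1 g.
  by move=> /Hf' h; exact: (PS_primary (MI_PS covT h) nfT).
have Pvar v : v \in T -> P 'X_[U_(v)].
  move=> vT; move/andP: mcT => [_ /forall_inP /(_ v vT) /hasP [g gs /andP [gv /eqP gd]]].
  have [dg gz] := priv_deg sq gs vT gv gd.
  have PXg : P 'X_[g].
    apply: (prime_pow (k := k) Ppr); rewrite mpolyXn; apply/Hf'.
    have := MIM (MIX K (inpow_mul k.+1 gs)) (MIk0 s f).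
    by rewrite addn0.
  have gU : (U_(v) <= g)%MM.
    by apply/mnm_lepP => j; rewrite mnm1E; case: eqP => [<-|]; lia.
  move: PXg; rewrite -(submK gU) mpolyXD => /Pmul [/PT1|//].
  by rewrite PS_X degB // degU vT dg.
have PT g : P g <-> PS T 1 g.
  split; first exact: PT1.
  move=> /allP h; rewrite (mpolyE g) big_seq; apply: (big_ind P) => // x xg.
  have [v vT xv] := deg_pos (h x xg).
  have xU : (U_(v) <= x)%MM.
    by apply/mnm_lepP => j; rewrite mnm1E; case: eqP => [<-|]; lia.
  by rewrite -mul_mpolyC -(submK xU) mpolyXD mulrA; apply: PM; apply: Pvar.
split => //.
suff [W col] : exists W, forall x, inpow s k (x + W)%MM = (0 < deg T x)%N.
  by exists 'X_[W] => g; rewrite PT ipowE (colonX col).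
case: (pickP (mem T)) => [v0 v0T'|none].
  have v0T : v0 \in T := v0T'.
  exists [multinom (if j \in T then (if j == v0 then k.-1 else 0%N) else k) | j < n].
  have degW : deg T [multinom (if j \in T then (if j == v0 then k.-1 else 0%N) else k) | j < n] = k.-1.
    rewrite /deg (bigD1 v0) //= mnmE v0T eqxx big1 ?addn0 // => j /andP [jT jv].
    by rewrite mnmE jT (negbTE jv).
  move=> x; apply/idP/idP.
    by move=> /(inpow_deg covT); rewrite degD degW; lia.
  move=> dx; apply: (inpow_mincover sq mcT).
    by rewrite degD degW; lia.
  by move=> j jT; rewrite mnmDE mnmE (negbTE jT); lia.
have deg0T x : deg T x = 0%N by rewrite /deg big_pred0.
exists [multinom k | j < n] => x; rewrite deg0T /=; apply/negP.
move=> /(inpow_deg covT); rewrite deg0T; lia.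
Qed.

End Main.

Section Del.
Variables (n : nat) (i : 'I_n.+1).

Definition lmon (m : 'X_{1..n}) : 'X_{1..n.+1} :=
  [multinom (if unlift i j is Some j' then m j' else 0%N) | j < n.+1].

Lemma del_lmon m : delete_mon i (lmon m) = m.
Proof. by apply/mnmP => j; rewrite /delete_mon /lmon !mnmE liftK. Qed.

Lemma lmon_i m : lmon m i = 0%N.
Proof. by rewrite /lmon mnmE unlift_none. Qed.

Lemma lmon_del (x : 'X_{1..n.+1}) : x i = 0%N -> lmon (delete_mon i x) = x.
Proof.
move=> xi; apply/mnmP => j; rewrite /lmon /delete_mon mnmE.
by case: unliftP => [j' ->|->]; rewrite ?mnmE.
Qed.

Lemma deg_lmon S m : deg S (lmon m) = deg [set j | lift i j \in S] m.
Proof.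
rewrite /deg big_mkcond /= (bigD1_ord i) //= lmon_i if_same add0n.
rewrite [RHS]big_mkcond /=; apply: eq_bigr => j _.
by rewrite inE /lmon mnmE liftK.
Qed.

Lemma inpow_del (s : seq 'X_{1..n.+1}) k (x : 'X_{1..n.+1}) : x i = 0%N -> inpow s k x ->
  inpow (deletion_gens i s) k (delete_mon i x).
Proof.
elim: k x => [|k IH] x //= xi /hasP [g gs /andP [gx ip]].
have gi : g i = 0%N by move/mnm_lepP: gx => /(_ i); rewrite xi; lia.
apply/hasP; exists (delete_mon i g).
  by rewrite /deletion_gens map_f // mem_filter gi eqxx.
apply/andP; split.
  by apply/mnm_lepP => j; rewrite /delete_mon !mnmE; move/mnm_lepP: gx.
have -> : (delete_mon i x - delete_mon i g)%MM = delete_mon i (x - g).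
  by apply/mnmP => j; rewrite /delete_mon !mnmE.
by apply: IH => //; rewrite mnmBE xi.
Qed.

Lemma cover_del (s : seq 'X_{1..n.+1}) S : mcover s S -> mcover (deletion_gens i s) [set j | lift i j \in S].
Proof.
move=> /allP cov; apply/allP => g' /mapP [g]; rewrite mem_filter => /andP [/eqP gi gs] ->.
by rewrite -deg_lmon lmon_del //; apply: cov.
Qed.

Lemma NTF_del (s : seq 'X_{1..n.+1}) : NTF s -> NTF (deletion_gens i s).
Proof.
move=> ntf k m k0 hcov; rewrite -(del_lmon m); apply: inpow_del; first exact: lmon_i.
apply: ntf => // S cS; rewrite deg_lmon; apply: hcov; exact: cover_del.
Qed.

Lemma sqf_del (s : seq 'X_{1..n.+1}) : sqf s -> sqf (deletion_gens i s).
Proof.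
move=> sq g' /mapP [g]; rewrite mem_filter => /andP [_ gs] -> j.
by rewrite /delete_mon mnmE; apply: sq.
Qed.

End Del.

Unset Implicit Arguments.

Theorem proposition3p23 (K : fieldType) (n : nat) (i : 'I_n.+1)
    (s : seq 'X_{1..n.+1}) :
  all (@squarefree_mon n.+1) s ->
  minimal_mon_gens s ->
  copersistent (monomial_ideal K s) ->
  copersistent (monomial_ideal K (deletion_gens i s)).
Proof.
move=> sqfb _ cp.
have sq : sqf s by move=> g gs j; move/allP: sqfb => /(_ g gs) /forallP; apply.
apply: NTF_copers; [exact: sqf_del | exact: NTF_del (copers_NTF sq cp)].
Qed.
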